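(* Let $\mathcal{H}$ be the positive orthant of the unit sphere $\mathbf{S}^\infty$ of $L^2(\mathbb{R}^n)$ (i.e., the set of a.e. nonnegative functions of unit $L^2$ norm), equipped with $d_S$. Let $\mathbf{m}_{k-1}, \mathbf{x}_k \in \mathcal{H}$ with $\langle \mathbf{m}_{k-1}, \mathbf{x}_k\rangle > 0$ and $\mathbf{m}_{k-1} \neq \mathbf{x}_k$, and let $w_k \in [0,1)$. Set $\theta = \arccos(\langle \mathbf{m}_{k-1}, \mathbf{x}_k\rangle) \in (0, \pi/2)$, $c = \tan\theta$, and $$ \alpha = \arctan\!\left( \frac{-1 + \sqrt{4c^2(1-w_k) - 4c^2(1-w_k)^2 + 1}}{2c(1-w_k)} \right). $$ Then the minimizer over $\mathbf{x} \in \mathcal{H}$ of $$ w_k\, d_S^2(\mathbf{x}_k, \mathbf{x}) + (1-w_k)\, d_S^2(\mathbf{m}_{k-1}, \mathbf{x}) $$ is $$ \mathbf{m}_k = \frac{\sin(\theta - \alpha)}{\sin\theta}\, \mathbf{m}_{k-1} + \frac{\sin\alpha}{\sin\theta}\, \mathbf{x}_k. $$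
   Context: $\mathbf{S}^\infty$ denotes the unit sphere of the Hilbert space $L^2(\mathbb{R}^n)$ with inner product $\langle\cdot,\cdot\rangle$. For $\widetilde f, \widetilde g \in \mathbf{S}^\infty$ with $\langle \widetilde f, \widetilde g\rangle \neq 0$, $d_S(\widetilde f, \widetilde g) = \sqrt{-\log \langle \widetilde f, \widetilde g\rangle^2}$ (and $d_S = +\infty$ if the inner product is $0$). *)

(* Defs.v *)
From HB Require Import structures.
From mathcomp Require Import all_boot all_order all_algebra.
From mathcomp Require Import all_classical all_reals all_analysis.

Set Implicit Arguments.
Unset Strict Implicit.
Unset Printing Implicit Defensive.
Import Order.TTheory GRing.Theory Num.Theory.

Local Open Scope classical_set_scope.
Local Open Scope ring_scope.

Section L2Sphere.
Context {R : realType} {n : nat}.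

(* R^n is rendered as n.-tuple R, equipped (by MathComp-Analysis) with the
   sigma-algebra generated by the coordinate projections, i.e. the Borel
   sigma-algebra of R^n. *)

(* mu is the n-dimensional Lebesgue measure: it assigns to every half-open
   box ]a,b] = prod_i ]a_i, b_i] its volume prod_i (b_i - a_i)^+.  This
   characterizes Lebesgue measure uniquely on the Borel sets of R^n. *)
Definition is_lebesgue_Rn (mu : {measure set (n.-tuple R) -> \bar R}) : Prop :=
  forall a b : n.-tuple R,
    mu [set x | forall i : 'I_n, tnth a i < tnth x i <= tnth b i] =
    (\prod_(i < n) Num.max 0 (tnth b i - tnth a i))%:E.

Variable mu : {measure set (n.-tuple R) -> \bar R}.

Definition L2 (f : n.-tuple R -> R) : Prop :=
  measurable_fun [set: n.-tuple R] f /\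
  mu.-integrable [set: n.-tuple R] (fun x => (f x ^+ 2)%:E).

Definition ip (f g : n.-tuple R -> R) : R :=
  Rintegral mu [set: n.-tuple R] (fun x => f x * g x).

Definition Horth (f : n.-tuple R -> R) : Prop :=
  L2 f /\ ip f f = 1 /\ {ae mu, forall x, 0 <= f x}.

Definition dS (f g : n.-tuple R -> R) : \bar R :=
  if ip f g == 0 then +oo%E else (Num.sqrt (- ln (ip f g ^+ 2)))%:E.

Definition objective (w : R) (xk m x : n.-tuple R -> R) : \bar R :=
  (w%:E * (dS xk x * dS xk x) + (1 - w)%:E * (dS m x * dS m x))%E.

End L2Sphere.

(* Main.v *)
Require Import Defs.
From HB Require Import structures.
From mathcomp Require Import all_boot all_order all_algebra.
From mathcomp Require Import all_classical all_reals all_analysis.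
From mathcomp Require Import ring lra measurable_realfun.
Import Order.TTheory GRing.Theory Num.Theory.
Local Open Scope classical_set_scope.
Local Open Scope ring_scope.

Section Core.
Context {R : realType}.

Lemma ln_le_sub1 (x : R) : 0 < x -> ln x <= x - 1.
Proof.
move=> x0; have := @le_ln1Dx R (x - 1); rewrite (_ : 1 + (x - 1) = x); last by ring. apply; lra.
Qed.

Lemma ln_sq_diff (x y : R) : 0 < x -> 0 < y ->
  ln (x ^+ 2) - ln (y ^+ 2) = 2 * ln (x / y).
Proof.
by move=> x0 y0; rewrite !lnXn // ln_div ?posrE // mulrBr !mulr_natl.
Qed.

Lemma Lbound (a w P Q p q : R) : 0 < a -> a < 1 -> 0 <= w -> w < 1 ->
  0 < P -> 0 < Q ->
  (1 - w) * (1 - a ^+ 2) = P * (P - a * Q) ->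
  w * (1 - a ^+ 2) = Q * (Q - a * P) ->
  P ^+ 2 + Q ^+ 2 - 2 * a * P * Q = 1 - a ^+ 2 ->
  p ^+ 2 + q ^+ 2 - 2 * a * p * q <= 1 - a ^+ 2 ->
  w * q * P + (1 - w) * p * Q <= P * Q /\
  (w * q * P + (1 - w) * p * Q = P * Q -> p = P /\ q = Q).
Proof.
move=> a0 a1 w0 w1 P0 Q0 tP tQ nPQ npq.
set K := p * P + q * Q - a * (p * Q + q * P).
have qf : forall x y : R, (x - a * y) ^+ 2 + (1 - a ^+ 2) * y ^+ 2 =
                          x ^+ 2 + y ^+ 2 - 2 * a * x * y by move=> x y; ring.
have Kid : (p - P) ^+ 2 + (q - Q) ^+ 2 - 2 * a * (p - P) * (q - Q) =
           (p ^+ 2 + q ^+ 2 - 2 * a * p * q) + (P ^+ 2 + Q ^+ 2 - 2 * a * P * Q) - 2 * K.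
  by rewrite /K; ring.
have qd : 0 <= (p - P - a * (q - Q)) ^+ 2 + (1 - a ^+ 2) * (q - Q) ^+ 2.
  apply: addr_ge0; first exact: sqr_ge0.
  apply: mulr_ge0; last exact: sqr_ge0.
  have : a ^+ 2 < 1 by rewrite expr2; nra.
  lra.
rewrite qf in qd.
have HK : K <= 1 - a ^+ 2 by lra.
have a2 : 0 < 1 - a ^+ 2 by rewrite expr2; nra.
have eqL : (1 - a ^+ 2) * (w * q * P + (1 - w) * p * Q) = P * Q * K.
  have -> : (1 - a ^+ 2) * (w * q * P + (1 - w) * p * Q) =
    q * P * (w * (1 - a ^+ 2)) + p * Q * ((1 - w) * (1 - a ^+ 2)) by ring.
  by rewrite tP tQ /K; ring.
have PQ0 : 0 < P * Q by apply: mulr_gt0.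
split.
  by rewrite -(ler_pM2l a2) eqL [X in _ <= X]mulrC ler_pM2l.
move=> eq1.
have KK : K = 1 - a ^+ 2.
  apply: (mulfI (lt0r_neq0 PQ0)); rewrite -eqL eq1; ring.
have z : (p - P - a * (q - Q)) ^+ 2 + (1 - a ^+ 2) * (q - Q) ^+ 2 = 0.
  rewrite qf Kid KK nPQ; lra.
have s1 := sqr_ge0 (p - P - a * (q - Q)).
have s2 : 0 <= (1 - a ^+ 2) * (q - Q) ^+ 2 by apply: mulr_ge0; [lra|exact: sqr_ge0].
have z2 : (1 - a ^+ 2) * (q - Q) ^+ 2 = 0 by lra.
have z1 : (p - P - a * (q - Q)) ^+ 2 = 0 by lra.
move/eqP: z2; rewrite mulf_eq0 (gt_eqF a2) /= expf_eq0 /= subr_eq0 => /eqP qQ.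
move/eqP: z1; rewrite qQ subrr mulr0 subr0 expf_eq0 /= subr_eq0 => /eqP pP.
by [].
Qed.


Lemma lnpart (a w P Q p q : R) : 0 < a -> a < 1 -> 0 <= w -> w < 1 ->
  0 < P -> 0 < Q ->
  (1 - w) * (1 - a ^+ 2) = P * (P - a * Q) ->
  w * (1 - a ^+ 2) = Q * (Q - a * P) ->
  P ^+ 2 + Q ^+ 2 - 2 * a * P * Q = 1 - a ^+ 2 ->
  p ^+ 2 + q ^+ 2 - 2 * a * p * q <= 1 - a ^+ 2 ->
  0 < p -> (0 < q \/ w = 0) ->
  w * ln (q ^+ 2) + (1 - w) * ln (p ^+ 2) <= w * ln (Q ^+ 2) + (1 - w) * ln (P ^+ 2) /\
  (w * ln (q ^+ 2) + (1 - w) * ln (p ^+ 2) = w * ln (Q ^+ 2) + (1 - w) * ln (P ^+ 2) ->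
   p = P /\ q = Q).
Proof.
move=> a0 a1 w0 w1 P0 Q0 tP tQ nPQ npq p0 hq.
have [Lle Leq] := Lbound a w P Q p q a0 a1 w0 w1 P0 Q0 tP tQ nPQ npq.
have hp : (1 - w) * (ln (p ^+ 2) - ln (P ^+ 2)) <= 2 * (1 - w) * (p / P - 1).
  rewrite ln_sq_diff // mulrA [(1 - w) * 2]mulrC; apply: ler_wpM2l.
    lra.
  apply: ln_le_sub1; exact: divr_gt0.
have hw : w * (ln (q ^+ 2) - ln (Q ^+ 2)) <= 2 * w * (q / Q - 1).
  case: hq => [q0|->]; last by rewrite !(mul0r, mulr0).
  rewrite ln_sq_diff // mulrA [w * 2]mulrC; apply: ler_wpM2l.
    lra.
  apply: ln_le_sub1; exact: divr_gt0.
have PQ0 : 0 < P * Q by apply: mulr_gt0.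
have Deq : w * (q / Q - 1) + (1 - w) * (p / P - 1) =
   (w * q * P + (1 - w) * p * Q - P * Q) / (P * Q).
  by field; rewrite ?mulf_neq0 ?gt_eqF.
have Dle : w * (q / Q - 1) + (1 - w) * (p / P - 1) <= 0.
  by rewrite Deq ler_pdivrMr // mul0r; lra.
split; first lra.
move=> E; apply: Leq.
have : 0 <= w * (q / Q - 1) + (1 - w) * (p / P - 1) by lra.
rewrite Deq ler_pdivlMr // mul0r => h; lra.
Qed.

End Core.

Section Alg.
Context {R : realType}.

Lemma alg (a w S C N s t : R) : 0 < a -> a < 1 -> 0 <= w -> w < 1 -> 0 < S ->
  S ^+ 2 = 1 - a ^+ 2 -> 0 < C -> 0 <= N -> C ^+ 2 + N ^+ 2 = 1 ->
  (1 - w) * S = C * (S * C - a * N) ->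
  s = (S * C - a * N) / S -> t = N / S ->
  0 <= s /\ 0 <= t /\ s + t * a = C /\ s * a + t = a * C + S * N /\ 0 < a * C + S * N /\
  (1 - w) * (1 - a ^+ 2) = C * (C - a * (a * C + S * N)) /\
  w * (1 - a ^+ 2) = (a * C + S * N) * ((a * C + S * N) - a * C) /\
  C ^+ 2 + (a * C + S * N) ^+ 2 - 2 * a * C * (a * C + S * N) = 1 - a ^+ 2 /\
  s * C + t * (a * C + S * N) = 1.
Proof.
move=> a0 a1 w0 w1 S0 eS C0 N0 eC eE hs ht.
set Q := a * C + S * N.
have Sn : S != 0 by rewrite gt_eqF.
have eS' : S ^+ 2 - (1 - a ^+ 2) = 0 by rewrite eS subrr.
have eC' : C ^+ 2 + N ^+ 2 - 1 = 0 by rewrite eC subrr.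
have eE' : (1 - w) * S - C * (S * C - a * N) = 0 by rewrite eE subrr.
have sp : 0 < S * C - a * N.
  rewrite -(pmulr_rgt0 _ C0) -eE; apply: mulr_gt0 => //; lra.
split; first by rewrite hs; apply: divr_ge0 => //; lra.
split; first by rewrite ht; apply: divr_ge0 => //; lra.
split; first by rewrite hs ht; field.
split.
  apply/eqP; rewrite -subr_eq0; apply/eqP.
  have -> : s * a + t - Q = - N * (S ^+ 2 - (1 - a ^+ 2)) / S.
    by rewrite hs ht /Q; field.
  by rewrite eS' mulr0 mul0r.
split.
  by rewrite /Q; have := mulr_gt0 a0 C0; have := mulr_ge0 (ltW S0) N0; lra.
split.
  apply/eqP; rewrite -subr_eq0; apply/eqP.
  have -> : (1 - w) * (1 - a ^+ 2) - C * (C - a * Q) =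
    S * ((1 - w) * S - C * (S * C - a * N)) + (C ^+ 2 - (1 - w)) * (S ^+ 2 - (1 - a ^+ 2)).
    by rewrite /Q; ring.
  by rewrite eS' eE' !mulr0 addr0.
split.
  apply/eqP; rewrite -subr_eq0; apply/eqP.
  have -> : w * (1 - a ^+ 2) - Q * (Q - a * C) =
    - w * (S ^+ 2 - (1 - a ^+ 2)) - S * ((1 - w) * S - C * (S * C - a * N))
    - S ^+ 2 * (C ^+ 2 + N ^+ 2 - 1).
    by rewrite /Q; ring.
  by rewrite eS' eE' eC' !mulr0 !subr0.
split.
  apply/eqP; rewrite -subr_eq0; apply/eqP.
  have -> : C ^+ 2 + Q ^+ 2 - 2 * a * C * Q - (1 - a ^+ 2) =
    S ^+ 2 * (C ^+ 2 + N ^+ 2 - 1) + (1 - C ^+ 2) * (S ^+ 2 - (1 - a ^+ 2)).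
    by rewrite /Q; ring.
  by rewrite eS' eC' !mulr0 addr0.
apply/eqP; rewrite -subr_eq0; apply/eqP.
have -> : s * C + t * Q - 1 = C ^+ 2 + N ^+ 2 - 1.
  by rewrite hs ht /Q; field.
by [].
Qed.

Lemma gram_le1 (a p q : R) : 0 < a -> a < 1 ->
  p ^+ 2 + q ^+ 2 - 2 * a * p * q <= 1 - a ^+ 2 -> p ^+ 2 <= 1 /\ q ^+ 2 <= 1.
Proof.
move=> a0 a1 h.
have a2 : 0 < 1 - a ^+ 2 by rewrite expr2; nra.
have h1 := sqr_ge0 (p - a * q); have h2 := sqr_ge0 (q - a * p).
have e1 : (p - a * q) ^+ 2 + (1 - a ^+ 2) * q ^+ 2 = p ^+ 2 + q ^+ 2 - 2 * a * p * q by ring.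
have e2 : (q - a * p) ^+ 2 + (1 - a ^+ 2) * p ^+ 2 = p ^+ 2 + q ^+ 2 - 2 * a * p * q by ring.
split.
  have : (1 - a ^+ 2) * p ^+ 2 <= (1 - a ^+ 2) * 1 by lra.
  by rewrite ler_pM2l.
have : (1 - a ^+ 2) * q ^+ 2 <= (1 - a ^+ 2) * 1 by lra.
by rewrite ler_pM2l.
Qed.

End Alg.

Section Trig.
Context {R : realType}.

Lemma trig (a w : R) : 0 < a -> a < 1 -> 0 <= w -> w < 1 ->
  let theta := acos a in
  let c := tan theta in
  let alpha := atan ((-1 + Num.sqrt (4 * c ^+ 2 * (1 - w)
                        - 4 * c ^+ 2 * (1 - w) ^+ 2 + 1))
                     / (2 * c * (1 - w))) in
  exists S C N : R, 0 < S /\ S ^+ 2 = 1 - a ^+ 2 /\ 0 < C /\ 0 <= N /\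
    C ^+ 2 + N ^+ 2 = 1 /\ (1 - w) * S = C * (S * C - a * N) /\
    sin (theta - alpha) / sin theta = (S * C - a * N) / S /\
    sin alpha / sin theta = N / S.
Proof.
move=> a0 a1 w0 w1 theta c alpha.
have aI : -1 <= a <= 1 by apply/andP; split; lra.
have ca : cos theta = a by rewrite /theta acosK // in_itv.
have sa : sin theta = Num.sqrt (1 - a ^+ 2) by rewrite /theta sin_acos.
have a2 : 0 < 1 - a ^+ 2 by rewrite expr2; nra.
set S := Num.sqrt (1 - a ^+ 2) in sa.
have S0 : 0 < S by rewrite /S sqrtr_gt0.
have eS : S ^+ 2 = 1 - a ^+ 2 by rewrite /S sqr_sqrtr // ltW.
have ceq : c = S / a by rewrite /c /tan ca sa.
have c0 : 0 < c by rewrite ceq divr_gt0.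
pose D := 4 * c ^+ 2 * (1 - w) - 4 * c ^+ 2 * (1 - w) ^+ 2 + 1.
have hD : D = 4 * c ^+ 2 * (1 - w) * w + 1 by rewrite /D; ring.
have D1 : 1 <= D.
  rewrite hD lerDr; apply: mulr_ge0 => //; apply: mulr_ge0; last lra.
  by apply: mulr_ge0 => //; exact: sqr_ge0.
pose sD := Num.sqrt D.
have esD : sD ^+ 2 = D by rewrite /sD sqr_sqrtr //; lra.
have sD0 : 0 <= sD by rewrite /sD sqrtr_ge0.
have sD1 : 1 <= sD by nra.
pose T := (-1 + sD) / (2 * c * (1 - w)).
have eT : alpha = atan T by [].
have u0 : 0 < 2 * c * (1 - w) by apply: mulr_gt0; [apply: mulr_gt0|lra].
have HT : T * (2 * c * (1 - w)) = sD - 1 by rewrite /T divfK ?gt_eqF //; ring.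
have T0 : 0 <= T by rewrite /T divr_ge0 //; lra.
have quad : (1 - w) * c * T ^+ 2 + T - w * c = 0.
  have h4 : 4 * (1 - w) * c * ((1 - w) * c * T ^+ 2 + T - w * c) =
    (T * (2 * c * (1 - w))) ^+ 2 + 2 * (T * (2 * c * (1 - w))) - 4 * w * (1 - w) * c ^+ 2.
    by ring.
  rewrite HT in h4.
  have h5 : (sD - 1) ^+ 2 + 2 * (sD - 1) - 4 * w * (1 - w) * c ^+ 2 = 0.
    have -> : (sD - 1) ^+ 2 + 2 * (sD - 1) - 4 * w * (1 - w) * c ^+ 2 =
              sD ^+ 2 - (4 * c ^+ 2 * (1 - w) * w + 1) by ring.
    by rewrite esD hD subrr.
  rewrite h5 in h4; move/eqP: h4; rewrite mulf_eq0 => /orP[|/eqP //].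
  by rewrite mulf_eq0 (gt_eqF c0) orbF mulf_eq0 => /orP[/eqP h|/eqP h]; lra.
set C := cos alpha; set N := sin alpha.
have C0 : 0 < C by rewrite /C eT cos_atan invr_gt0 sqrtr_gt0; have := sqr_ge0 T; lra.
have tT : N / C = T by have := atanK T; rewrite /tan -eT.
have NT : N = T * C by rewrite -tT divfK ?gt_eqF.
exists S, C, N.
split => //; split => //; split => //.
split; first by rewrite NT mulr_ge0 // ltW.
split; first by rewrite /C /N cos2Dsin2.
have eC' : C ^+ 2 + N ^+ 2 - 1 = 0 by rewrite /C /N cos2Dsin2 subrr.
split.
  apply/eqP; rewrite -subr_eq0; apply/eqP.
  have -> : (1 - w) * S - C * (S * C - a * N) =
    - (1 - w) * S * (C ^+ 2 + N ^+ 2 - 1) +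
    a * C ^+ 2 * ((1 - w) * c * T ^+ 2 + T - w * c).
    by rewrite NT ceq; field; rewrite gt_eqF.
  by rewrite eC' quad !mulr0 addr0.
split; first by rewrite sinB ca sa.
by rewrite sa.
Qed.

End Trig.

Set Implicit Arguments.
Unset Strict Implicit.

Section Helpers.
Context {R : realType} {n : nat} (mu : {measure set (n.-tuple R) -> \bar R}).
Local Notation T := (n.-tuple R).

Lemma L2_mul (f g : T -> R) : L2 mu f -> L2 mu g ->
  mu.-integrable setT (fun x => (f x * g x)%:E).
Proof.
move=> [mf if2] [mg ig2].
have ifg : mu.-integrable setT (fun x => (f x ^+ 2 + g x ^+ 2)%:E).
  by apply: (eq_integrable measurableT _ _ _ (integrableD measurableT if2 ig2)) => x _.
apply: (le_integrable measurableT) ifg.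
  by apply/measurable_EFinP; exact: measurable_funM.
move=> x _; rewrite !abse_EFin lee_fin.
rewrite [X in _ <= X]ger0_norm; last by rewrite addr_ge0 // sqr_ge0.
rewrite ler_norml; apply/andP; split; nra.
Qed.

Lemma L2_comb (a b : R) (f g : T -> R) : L2 mu f -> L2 mu g ->
  L2 mu (fun x => a * f x + b * g x).
Proof.
move=> [mf if2] [mg ig2]; split.
  apply: measurable_funD; apply: measurable_funM => //; exact: measurable_cst.
have i1 := integrableZl measurableT (2 * a ^+ 2) if2.
have i2 := integrableZl measurableT (2 * b ^+ 2) ig2.
have ifg := integrableD measurableT i1 i2.
apply: (le_integrable measurableT) ifg.
  apply/measurable_EFinP.
  apply: measurable_funX; apply: measurable_funD; apply: measurable_funM => //;
    exact: measurable_cst.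
move=> x _ /=; rewrite lee_fin.
rewrite [X in _ <= X]ger0_norm; last first.
  by have := sqr_ge0 (a * f x); have := sqr_ge0 (b * g x); rewrite !exprMn; lra.
rewrite ger0_norm; last exact: sqr_ge0.
have := sqr_ge0 (a * f x - b * g x); nra.
Qed.

Lemma ip_sym (f g : T -> R) : ip mu f g = ip mu g f.
Proof. by rewrite /ip; apply: eq_Rintegral => x _; rewrite mulrC. Qed.

Lemma ip_combl (a b : R) (f g h : T -> R) : L2 mu f -> L2 mu g -> L2 mu h ->
  ip mu (fun x => a * f x + b * g x) h = a * ip mu f h + b * ip mu g h.
Proof.
move=> Lf Lg Lh; rewrite /ip.
have ifh := L2_mul Lf Lh; have igh := L2_mul Lg Lh.
rewrite -(RintegralZl a measurableT ifh) -(RintegralZl b measurableT igh).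
rewrite -RintegralD //.
- by apply: eq_Rintegral => x _; rewrite mulrDl !mulrA.
- by apply: (eq_integrable measurableT _ _ _ (integrableZl measurableT a ifh)) => x _; rewrite /= EFinM.
- by apply: (eq_integrable measurableT _ _ _ (integrableZl measurableT b igh)) => x _; rewrite /= EFinM.
Qed.

Lemma ip_combr (a b : R) (f g h : T -> R) : L2 mu f -> L2 mu g -> L2 mu h ->
  ip mu h (fun x => a * f x + b * g x) = a * ip mu h f + b * ip mu h g.
Proof.
by move=> Lf Lg Lh; rewrite ip_sym ip_combl // (ip_sym f) (ip_sym g).
Qed.

Lemma ip_sq_ge0 (f : T -> R) : 0 <= ip mu f f.
Proof. by apply: Rintegral_ge0 => x _; rewrite -expr2 sqr_ge0. Qed.

Lemma ip_eq0 (f : T -> R) : L2 mu f -> ip mu f f = 0 -> f = (fun=> 0) %[ae mu].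
Proof.
move=> Lf h0.
have iff := L2_mul Lf Lf.
have mff : measurable_fun setT (fun x => (f x * f x)%:E).
  by case/integrableP: iff.
have : (\int[mu]_(x in setT) `|(f x * f x)%:E| = 0)%E.
  rewrite (eq_integral (fun x => (f x * f x)%:E)); last first.
    by move=> x _; rewrite abse_EFin ger0_norm // -expr2 sqr_ge0.
  have fin := integrable_fin_num measurableT iff.
  by rewrite -(fineK fin); move: h0; rewrite /ip /Rintegral => ->.
move/(ae_eq_integral_abs _ measurableT mff).
apply: filterS => x /[apply] /= /eqP.
by rewrite eqe mulf_eq0 orbb => /eqP.
Qed.

Lemma ip_ge0 (f g : T -> R) : L2 mu f -> L2 mu g ->
  {ae mu, forall x, 0 <= f x} -> {ae mu, forall x, 0 <= g x} -> 0 <= ip mu f g.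
Proof.
move=> Lf Lg f0 g0.
have ifg := L2_mul Lf Lg.
have mfg : measurable_fun setT (fun x => (f x * g x)%:E) by case/integrableP: ifg.
rewrite /ip /Rintegral.
rewrite (ae_eq_integral (fun x => `|(f x * g x)%:E|)%E _ measurableT mfg).
- by apply: fine_ge0; apply: integral_ge0 => x _.
- exact: measurableT_comp.
- apply: filterS2 f0 g0 => x fx gx _.
  by rewrite abse_EFin ger0_norm // mulr_ge0.
Qed.


Lemma ip_quad (a b : R) (f g : T -> R) : L2 mu f -> L2 mu g ->
  ip mu (fun x => a * f x + b * g x) (fun x => a * f x + b * g x) =
  a ^+ 2 * ip mu f f + 2 * a * b * ip mu f g + b ^+ 2 * ip mu g g.
Proof.
move=> Lf Lg; have Lc := L2_comb a b Lf Lg.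
rewrite ip_combl // !ip_combr // (ip_sym g f); ring.
Qed.

Lemma ip_lt1 (f g : T -> R) : Horth mu f -> Horth mu g -> ~ (f = g %[ae mu]) ->
  ip mu f g < 1.
Proof.
move=> [Lf [ff _]] [Lg [gg _]] hne.
have Ld := L2_comb 1 (-1) Lf Lg.
have q := ip_quad 1 (-1) Lf Lg; rewrite ff gg in q.
have := ip_sq_ge0 (fun x => 1 * f x + -1 * g x); rewrite q => h.
rewrite lt_neqAle; apply/andP; split; last lra.
apply/eqP => e; apply: hne.
have := ip_eq0 Ld; rewrite q e => /(_ ltac:(ring)).
by apply: filterS => x /[apply] /= h0; lra.
Qed.

Lemma gram (f g x : T -> R) : L2 mu f -> L2 mu g -> L2 mu x ->
  ip mu f f = 1 -> ip mu g g = 1 -> ip mu x x = 1 ->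
  let a := ip mu f g in let p := ip mu f x in let q := ip mu g x in
  0 <= a -> a < 1 -> p ^+ 2 + q ^+ 2 - 2 * a * p * q <= 1 - a ^+ 2.
Proof.
move=> Lf Lg Lx ff gg xx a p q a0 a1.
pose al := p - a * q; pose be := q - a * p.
pose u := fun z => (1 - a ^+ 2) * x z + (- al) * f z.
have Lu : L2 mu u := L2_comb _ _ Lx Lf.
have y := ip_quad 1 (- be) Lu Lg.
have uu : ip mu u u = (1 - a ^+ 2) ^+ 2 + 2 * (1 - a ^+ 2) * (- al) * p + al ^+ 2.
  rewrite /u ip_quad // xx ff (ip_sym x f) -/p; ring.
have ug : ip mu u g = (1 - a ^+ 2) * q - al * a.
  rewrite /u ip_combl // (ip_sym x g) -/q -/a; ring.
rewrite uu ug gg in y.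
have := ip_sq_ge0 (fun z => 1 * u z + - be * g z); rewrite y => h.
have e : (1 - a ^+ 2) ^+ 2 + 2 * (1 - a ^+ 2) * - al * p + al ^+ 2 + 2 * 1 * - be * ((1 - a ^+ 2) * q - al * a) + (- be) ^+ 2 * 1
   = (1 - a ^+ 2) * ((1 - a ^+ 2) - (p ^+ 2 + q ^+ 2 - 2 * a * p * q)).
  by rewrite /al /be; ring.
rewrite expr1n mul1r e in h.
have a2 : 0 < 1 - a ^+ 2 by rewrite expr2; nra.
by move: h; rewrite pmulr_rge0 // subr_ge0.
Qed.


Lemma dS_sq (f g : T -> R) : 0 < ip mu f g -> ip mu f g ^+ 2 <= 1 ->
  (dS mu f g * dS mu f g = (- ln (ip mu f g ^+ 2))%:E)%E.
Proof.
move=> h0 h1; rewrite /dS gt_eqF // -EFinM -expr2 sqr_sqrtr //.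
by rewrite oppr_ge0 ln_le0.
Qed.

Lemma dS_sq0 (f g : T -> R) : ip mu f g = 0 -> (dS mu f g * dS mu f g = +oo)%E.
Proof. by move=> h; rewrite /dS h eqxx mulyy. Qed.

Lemma dS_sq_ge0 (f g : T -> R) : (0 <= dS mu f g * dS mu f g)%E.
Proof.
rewrite /dS; case: ifP => _; first by rewrite mulyy leey.
by rewrite -EFinM lee_fin mulr_ge0 // sqrtr_ge0.
Qed.

Lemma term_fin (w : R) (f g : T -> R) : 0 <= ip mu f g -> ip mu f g ^+ 2 <= 1 ->
  (0 < ip mu f g \/ w = 0) ->
  (w%:E * (dS mu f g * dS mu f g) = (w * - ln (ip mu f g ^+ 2))%:E)%E.
Proof.
move=> _ h1 [h0|->]; first by rewrite dS_sq // -EFinM.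
by rewrite mul0e mul0r.
Qed.

Lemma term_inf (w : R) (f g : T -> R) : 0 < w -> ip mu f g = 0 ->
  (w%:E * (dS mu f g * dS mu f g) = +oo)%E.
Proof. by move=> w0 h; rewrite dS_sq0 // muleC gt0_mulye // lte_fin. Qed.

Lemma obj_fin (w : R) (xk m x : T -> R) : 0 <= w -> w < 1 ->
  0 < ip mu m x -> ip mu m x ^+ 2 <= 1 ->
  0 <= ip mu xk x -> ip mu xk x ^+ 2 <= 1 -> (0 < ip mu xk x \/ w = 0) ->
  objective mu w xk m x =
  (w * - ln (ip mu xk x ^+ 2) + (1 - w) * - ln (ip mu m x ^+ 2))%:E.
Proof.
move=> w0 w1 p0 p1 q0 q1 hq.
by rewrite /objective term_fin // term_fin ?EFinD //; [exact: ltW | left].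
Qed.

Lemma obj_inf (w : R) (xk m x : T -> R) : 0 <= w -> w < 1 ->
  (ip mu m x = 0 \/ (ip mu xk x = 0 /\ 0 < w)) ->
  objective mu w xk m x = +oo%E.
Proof.
move=> w0 w1 [p0|[q0 wp]]; rewrite /objective.
  rewrite (@term_inf (1 - w) _ _ _ p0); last lra.
  by apply: addey; rewrite gt_eqF // (lt_le_trans ltNy0) // mule_ge0 // ?lee_fin // dS_sq_ge0.
rewrite (@term_inf w _ _ wp q0).
apply: addye; rewrite gt_eqF // (lt_le_trans ltNy0) // mule_ge0 // ?lee_fin ?dS_sq_ge0 //.
lra.
Qed.

End Helpers.

Unset Implicit Arguments.
Set Strict Implicit.

Lemma main_core (R : realType) (n : nat) (mu : {measure set (n.-tuple R) -> \bar R})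
  (m xk : n.-tuple R -> R) (w a S C N s t : R)
  (hm : Horth mu m) (hxk : Horth mu xk) (ha : ip mu m xk = a)
  (a0 : 0 < a) (a1 : a < 1) (hw0 : 0 <= w) (hw1 : w < 1)
  (S0 : 0 < S) (eS : S ^+ 2 = 1 - a ^+ 2) (C0 : 0 < C) (N0 : 0 <= N)
  (eC : C ^+ 2 + N ^+ 2 = 1)
  (eE : (1 - w) * S = C * (S * C - a * N)) (hs : s = (S * C - a * N) / S)
  (ht : t = N / S) :
  [/\ Horth mu (fun z => (s * m z + t * xk z)%R),
      (forall x, Horth mu x ->
         (objective mu w xk m (fun z => (s * m z + t * xk z)%R) <= objective mu w xk m x)%E)
    & (forall x, Horth mu x ->
         (forall y, Horth mu y ->
            (objective mu w xk m x <= objective mu w xk m y)%E) ->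
         x = (fun z => (s * m z + t * xk z)%R) %[ae mu])].
Proof.
case: hm => Lm [mm m0]; case: hxk => Lk [kk k0].
have [sge [tge [eP [eQ [Q0 [tP [tQ [nPQ sPtQ]]]]]]]] :=
  alg a w S C N s t a0 a1 hw0 hw1 S0 eS C0 N0 eC eE hs ht.
set Q := a * C + S * N in eQ Q0 tP tQ nPQ sPtQ.
have ka : ip mu xk m = a by rewrite ip_sym.
have Lmk := L2_comb s t Lm Lk.
have ipm : ip mu m (fun z => (s * m z + t * xk z)%R) = C.
  by rewrite ip_combr // mm ha mulr1.
have ipk : ip mu xk (fun z => (s * m z + t * xk z)%R) = Q.
  by rewrite ip_combr // kk ka mulr1.
have ipmk : ip mu (fun z => (s * m z + t * xk z)%R) (fun z => (s * m z + t * xk z)%R) = 1.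
  by rewrite ip_combl // ipm ipk.
have Hmk : Horth mu (fun z => (s * m z + t * xk z)%R).
  split => //; split => //.
  by apply: filterS2 m0 k0 => z hz1 hz2; apply: addr_ge0; apply: mulr_ge0.
have [C1 Q1] : C ^+ 2 <= 1 /\ Q ^+ 2 <= 1.
  by apply: (gram_le1 a C Q) => //; rewrite nPQ.
have objmk : objective mu w xk m (fun z => (s * m z + t * xk z)%R) =
    (w * - ln (Q ^+ 2) + (1 - w) * - ln (C ^+ 2))%:E.
  rewrite obj_fin ?ipm ?ipk //; by [apply: ltW | left].
have cases : forall x, Horth mu x ->
   objective mu w xk m x = +oo%E \/
   [/\ 0 < ip mu m x, (0 < ip mu xk x \/ w = 0),
       ip mu m x ^+ 2 + ip mu xk x ^+ 2 - 2 * a * ip mu m x * ip mu xk x <= 1 - a ^+ 2 &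
       objective mu w xk m x =
       (w * - ln (ip mu xk x ^+ 2) + (1 - w) * - ln (ip mu m x ^+ 2))%:E].
  move=> x [Lx [xx x0]].
  have p0 : 0 <= ip mu m x := ip_ge0 Lm Lx m0 x0.
  have q0 : 0 <= ip mu xk x := ip_ge0 Lk Lx k0 x0.
  have gx : ip mu m x ^+ 2 + ip mu xk x ^+ 2 - 2 * a * ip mu m x * ip mu xk x
      <= 1 - a ^+ 2.
    by have := gram Lm Lk Lx mm kk xx; rewrite /= ha; apply => //; exact: ltW.
  have [p1 q1] := gram_le1 a (ip mu m x) (ip mu xk x) a0 a1 gx.
  have [pz|pP] : ip mu m x = 0 \/ 0 < ip mu m x.
    by move: p0; rewrite le_eqVlt => /orP[/eqP <-|]; [left|right].
    by left; apply: obj_inf => //; left.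
  have [[qz wP]|hq] : (ip mu xk x = 0 /\ 0 < w) \/ (0 < ip mu xk x \/ w = 0).
    move: q0 hw0; rewrite !le_eqVlt => /orP[/eqP <-|qP] /orP[/eqP <-|wP].
    - by right; right.
    - by left.
    - by right; right.
    - by right; left.
    by left; apply: obj_inf => //; right.
  by right; split => //; apply: obj_fin.
have part2 : forall x, Horth mu x ->
    (objective mu w xk m (fun z => (s * m z + t * xk z)%R) <= objective mu w xk m x)%E.
  move=> x Hx; case: (cases x Hx) => [->|[pP hq gx ->]]; first exact: leey.
  rewrite objmk lee_fin.
  have [L _] := lnpart a w C Q (ip mu m x) (ip mu xk x) a0 a1 hw0 hw1 C0 Q0
     tP tQ nPQ gx pP hq.
  lra.
split => //.
move=> x Hx hmin.
have h1 := hmin _ Hmk; have h2 := part2 x Hx.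
case: (cases x Hx) h1 h2 => [->|[pP hq gx ->]].
  by rewrite objmk leye_eq.
rewrite objmk !lee_fin => h1 h2.
have [_ E] := lnpart a w C Q (ip mu m x) (ip mu xk x) a0 a1 hw0 hw1 C0 Q0
     tP tQ nPQ gx pP hq.
have [pC qQ] : ip mu m x = C /\ ip mu xk x = Q by apply: E; lra.
case: Hx => Lx [xx _].
have ixm : ip mu x (fun z => (s * m z + t * xk z)%R) = 1.
  by rewrite ip_combr // (ip_sym mu x m) (ip_sym mu x xk) pC qQ.
have d := ip_quad 1 (-1) Lx Lmk; rewrite xx ixm ipmk in d.
have := ip_eq0 (L2_comb 1 (-1) Lx Lmk); rewrite d => /(_ ltac:(ring)).
by apply: filterS => z /[apply] /= h; lra.
Qed.

Theorem proposition3 (R : realType) (n : nat)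
  (mu : {measure set (n.-tuple R) -> \bar R}) (hmu : is_lebesgue_Rn mu)
  (m xk : n.-tuple R -> R) (w : R)
  (hm : Horth mu m) (hxk : Horth mu xk)
  (hpos : 0 < ip mu m xk) (hneq : ~ (m = xk %[ae mu]))
  (hw0 : 0 <= w) (hw1 : w < 1) :
  let theta := acos (ip mu m xk) in
  let c := tan theta in
  let alpha := atan ((-1 + Num.sqrt (4 * c ^+ 2 * (1 - w)
                        - 4 * c ^+ 2 * (1 - w) ^+ 2 + 1))
                     / (2 * c * (1 - w))) in
  let mk := fun x => sin (theta - alpha) / sin theta * m x
                     + sin alpha / sin theta * xk x in
  [/\ Horth mu mk,
      (forall x, Horth mu x ->
         (objective mu w xk m mk <= objective mu w xk m x)%E)
    & (forall x, Horth mu x ->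
         (forall y, Horth mu y ->
            (objective mu w xk m x <= objective mu w xk m y)%E) ->
         x = mk %[ae mu])].
Proof.
move=> theta c alpha mk.
have a1 := ip_lt1 hm hxk hneq.
case: (trig (ip mu m xk) w hpos a1 hw0 hw1) =>
  S [C [N [S0 [eS [C0 [N0 [eC [eE [hs ht]]]]]]]]].
exact: (main_core R n mu m xk w (ip mu m xk) S C N _ _ hm hxk erefl hpos a1
  hw0 hw1 S0 eS C0 N0 eC eE hs ht).
Qed.
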